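(* Let $B=(b_{ij})$ be an $n\times n$ skew-symmetrizable integer matrix and let $D=\operatorname{diag}(d_1,\dots,d_n)$ be a skew-symmetrizer of $B$ (positive integers $d_i$ with $DB$ skew-symmetric), and put $\mathbf d=(d_1,\dots,d_n)$. Then for every $k\in\{1,\dots,n\}$ the weighted quivers $\mu_k(Q_B,\mathbf d)$ and $(Q_{\mu_k(B)},\mathbf d)$ are isomorphic (as weighted quivers on the vertex set $\{1,\dots,n\}$ with weight tuple $\mathbf d$).
   Context: A weighted quiver is a pair $(Q,\mathbf d)$ where $Q$ is a finite loop-free quiver on vertex set $Q_0$ (multiple arrows and 2-cycles allowed) and $\mathbf d=(d_i)_{i\in Q_0}$ is a tuple of positive integers. For $B$ and $D$ as in the claim, $Q_B$ is the quiver on vertex set $\{1,\dots,n\}$ having, for every pair $i,j$ with $c_{ij}\ge 0$, exactly $c_{ij}$ arrows from $j$ to $i$, where $c_{ij}=\gcd(d_i,d_j)b_{ij}/d_j$ (the matrix $(c_{ij})$ is a skew-symmetric integer matrix). Matrix mutation: $\mu_k(B)=B'$ with $b'_{ij}=-b_{ij}$ if $i=k$ or $j=k$, and $b'_{ij}=b_{ij}+\frac{b_{ik}|b_{kj}|+|b_{ik}|b_{kj}}{2}$ otherwise. Mutation of a weighted quiver $(Q,\mathbf d)$ at a vertex $k$: $\mu_k(Q,\mathbf d)$ has the same vertex set and weight tuple, and its quiver is obtained by (1) for each pair of arrows $j\to k$, $k\to i$, adding $\frac{\gcd(d_i,d_j)d_k}{\gcd(d_i,d_k)\gcd(d_k,d_j)}$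 new arrows from $j$ to $i$; (2) reversing every arrow incident to $k$; (3) choosing a maximal collection of pairwise disjoint oriented 2-cycles and deleting its arrows. *)

(* Defs.v *)
From HB Require Import structures.
From mathcomp Require Import all_boot all_order all_algebra.
Set Implicit Arguments. Unset Strict Implicit. Unset Printing Implicit Defensive.
Import Order.TTheory GRing.Theory Num.Theory.

(* A quiver on the vertex set 'I_n (= {1,..,n}) with multiple arrows, given up
   to isomorphism fixing the vertices, i.e. by its arrow counts:
   Q i j = number of arrows from i to j. *)
Definition quiver (n : nat) := 'I_n -> 'I_n -> nat.

Record wquiver (n : nat) := WQuiver { wq_quiver : quiver n; wq_weight : 'I_n -> nat }.

(* Isomorphism of weighted quivers on the vertex set 'I_n with the same weight
   tuple: identity on vertices, bijection on arrows (= equal arrow counts). *)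
Definition wq_iso n (P Q : wquiver n) : Prop :=
  (forall i, wq_weight P i = wq_weight Q i) /\
  (forall i j, wq_quiver P i j = wq_quiver Q i j).

Local Open Scope ring_scope.

Definition skew_symmetrizer n (B : 'M[int]_n) (d : 'I_n -> nat) : Prop :=
  (forall i, (0 < d i)%N) /\
  (forall i j, (d i)%:Z * B i j = - ((d j)%:Z * B j i)).

Definition mat_mut n (k : 'I_n) (B : 'M[int]_n) : 'M[int]_n :=
  \matrix_(i, j)
    if (i == k) || (j == k) then - B i j
    else B i j + ((B i k * `|B k j| + `|B i k| * B k j) %/ 2)%Z.

Definition cmat n (B : 'M[int]_n) (d : 'I_n -> nat) (i j : 'I_n) : int :=
  (((gcdn (d i) (d j))%:Z * B i j) %/ (d j)%:Z)%Z.

Definition quiver_of n (B : 'M[int]_n) (d : 'I_n -> nat) : quiver n :=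
  fun j i => if 0 <= cmat B d i j then absz (cmat B d i j) else 0%N.

Definition wq_mut n (k : 'I_n) (W : wquiver n) : wquiver n :=
  let Q := wq_quiver W in
  let d := wq_weight W in
  let Q1 : quiver n := fun j i =>
    (Q j i + Q j k * Q k i *
       (gcdn (d i) (d j) * d k %/ (gcdn (d i) (d k) * gcdn (d k) (d j))))%N in
  let Q2 : quiver n := fun i j =>
    if (i == k) || (j == k) then Q1 j i else Q1 i j in
  (* (3) delete a maximal collection of pairwise disjoint oriented 2-cycles:
         between i and j exactly min(#(i->j), #(j->i)) such cycles are removed *)
  let Q3 : quiver n := fun i j => (Q2 i j - minn (Q2 i j) (Q2 j i))%N in
  WQuiver Q3 d.

(* Main.v *)
Require Import Defs.
From HB Require Import structures.
From mathcomp Require Import all_boot all_order all_algebra.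
From mathcomp Require Import ring lra zify.
Set Implicit Arguments. Unset Strict Implicit. Unset Printing Implicit Defensive.
Import Order.TTheory GRing.Theory Num.Theory.

Lemma dvd_gcd_aux (n m x : nat) : (n %| m * x)%N -> (n %| gcdn m n * x)%N.
Proof.
move=> h; rewrite muln_gcdl dvdn_gcd h /=; exact: dvdn_mulr.
Qed.

Lemma gcd3_dvd (a b c : nat) : (gcdn a c * gcdn c b %| gcdn a b * c)%N.
Proof.
have h1 : (gcdn a c * gcdn c b %| a * c)%N.
  apply: dvdn_trans (dvdn_mul (dvdn_gcdl a c) (dvdnn _)) _.
  exact: dvdn_mul (dvdnn a) (dvdn_gcdl c b).
have h2 : (gcdn a c * gcdn c b %| b * c)%N.
  rewrite [(b * c)%N]mulnC; exact: dvdn_mul (dvdn_gcdr a c) (dvdn_gcdr c b).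
by rewrite [X in (_ %| X)%N]muln_gcdl dvdn_gcd h1 h2.
Qed.

Local Open Scope ring_scope.

Definition posz (x : int) : int := if 0 <= x then x else 0.

Lemma quiver_of_int n (B : 'M[int]_n) d i j :
  (quiver_of B d j i)%:Z = posz (cmat B d i j).
Proof. by rewrite /quiver_of /posz; case: ifP => // h; rewrite gez0_abs. Qed.

Lemma cmat_exact n (B : 'M[int]_n) d (hD : skew_symmetrizer B d) i j :
  (d j)%:Z * cmat B d i j = (gcdn (d i) (d j))%:Z * B i j.
Proof.
case: hD => _ hs.
rewrite /cmat mulrC divzK //.
rewrite /dvdz unfold_in /= abszM !absz_nat.
apply: dvd_gcd_aux.
have := congr1 absz (hs i j).
rewrite abszN !abszM !absz_nat => ->.
exact: dvdn_mulr.
Qed.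

Lemma nat_min_lemma (a b : nat) (c : int) : a%:Z - b%:Z = c ->
  (a - minn a b)%N = if 0 <= c then absz c else 0%N.
Proof.
case: c => m h.
  have e : (a = b + m)%N by lia.
  by rewrite /= e; lia.
have e : (b = a + m.+1)%N by lia.
by rewrite /=; lia.
Qed.

Lemma posz_ge0 x : 0 <= x -> posz x = x.
Proof. by rewrite /posz => ->. Qed.
Lemma posz_le0 x : x <= 0 -> posz x = 0.
Proof. by rewrite /posz; case: ifP => // h1 h2; apply/eqP; rewrite eq_le h1 h2. Qed.

Lemma core (di dk g gik gjk F bki bjk cki cjk : int) :
 0 < di -> 0 < dk -> 0 < gik -> 0 < gjk ->
 di*cki = gik*bki -> dk*cjk = gjk*bjk -> F*(gik*gjk) = g*dk ->
 g * ((bjk*`|bki| + `|bjk|*bki) %/ 2)%Z =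
   di * (F * (posz cki * posz cjk - posz (-cjk) * posz (-cki))).
Proof.
move=> hdi hdk hgi hgj e1 e2 e3.
have base : g * (bjk * bki) = di * (F * (cki * cjk)).
  apply: (mulIf (lt0r_neq0 hdk)).
  have -> : di * (F * (cki * cjk)) * dk = F * (di * cki) * (dk * cjk) by ring.
  rewrite e1 e2.
  have -> : F * (gik * bki) * (gjk * bjk) = F * (gik * gjk) * (bki * bjk) by ring.
  rewrite e3; ring.
case: (lerP 0 bki) => hb1; case: (lerP 0 bjk) => hb2.
- have hc1 : 0 <= cki by nra.
  have hc2 : 0 <= cjk by nra.
  rewrite (ger0_norm hb1) (ger0_norm hb2) (posz_ge0 hc1) (posz_ge0 hc2).
  rewrite (posz_le0 (x := - cjk)) ?oppr_le0 // (posz_le0 (x := - cki)) ?oppr_le0 //.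
  have -> : bjk * bki + bjk * bki = (bjk * bki) * 2 by ring.
  rewrite mulzK //; rewrite base; ring.
- have hc1 : 0 <= cki by nra.
  have hc2 : cjk < 0 by nra.
  rewrite (ger0_norm hb1) (ltr0_norm hb2) (posz_ge0 hc1) (posz_le0 (ltW hc2)).
  rewrite (posz_le0 (x := - cki)) ?oppr_le0 //.
  have -> : bjk * bki + - bjk * bki = 0 * 2 by ring.
  rewrite mulzK //; ring.
- have hc1 : cki < 0 by nra.
  have hc2 : 0 <= cjk by nra.
  rewrite (ltr0_norm hb1) (ger0_norm hb2) (posz_le0 (ltW hc1)).
  rewrite (posz_le0 (x := - cjk)) ?oppr_le0 //.
  have -> : bjk * - bki + bjk * bki = 0 * 2 by ring.
  rewrite mulzK //; ring.
- have hc1 : cki < 0 by nra.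
  have hc2 : cjk < 0 by nra.
  rewrite (ltr0_norm hb1) (ltr0_norm hb2) (posz_le0 (ltW hc1)) (posz_le0 (ltW hc2)).
  rewrite (posz_ge0 (x := - cjk)) ?oppr_ge0 ?(ltW hc2) // (posz_ge0 (x := - cki)) ?oppr_ge0 ?(ltW hc1) //.
  have -> : bjk * - bki + - bjk * bki = (- (bjk * bki)) * 2 by ring.
  rewrite mulzK // mulrN base; ring.
Qed.

Lemma cmat_skew n (B : 'M[int]_n) d (hD : skew_symmetrizer B d) i j :
  cmat B d j i = - cmat B d i j.
Proof.
have e1 := cmat_exact hD i j; have e2 := cmat_exact hD j i.
case: hD => hp hs.
have hi : (d i)%:Z != 0 by rewrite lt0r_neq0 // ltz_nat hp.
have hj : (d j)%:Z != 0 by rewrite lt0r_neq0 // ltz_nat hp.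
apply: (mulIf (mulf_neq0 hi hj)).
have -> : cmat B d j i * ((d i)%:Z * (d j)%:Z) = (d j)%:Z * ((d i)%:Z * cmat B d j i) by ring.
rewrite e2 gcdnC.
have -> : - cmat B d i j * ((d i)%:Z * (d j)%:Z) = - ((d i)%:Z * ((d j)%:Z * cmat B d i j)) by ring.
rewrite e1.
have -> : - ((d i)%:Z * ((gcdn (d i) (d j))%:Z * B i j)) = - ((gcdn (d i) (d j))%:Z * ((d i)%:Z * B i j)) by ring.
rewrite hs; ring.
Qed.

Lemma quiver_kk n (B : 'M[int]_n) d (hD : skew_symmetrizer B d) k :
  quiver_of B d k k = 0%N.
Proof.
have h := cmat_skew hD k k.
have h0 : cmat B d k k = 0 by lra.
by rewrite /quiver_of h0.
Qed.

Theorem mainTheorem1 (n : nat) (B : 'M[int]_n) (d : 'I_n -> nat)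
  (hD : skew_symmetrizer B d) (k : 'I_n) :
  wq_iso (wq_mut k (WQuiver (quiver_of B d) d))
         (WQuiver (quiver_of (mat_mut k B) d) d).
Proof.
split => // i j /=.
apply: nat_min_lemma.
have hpos : forall x, 0 < (d x)%:Z by move=> x; rewrite ltz_nat; case: hD.
have hnz : forall x, (d x)%:Z != 0 by move=> x; rewrite lt0r_neq0.
have pp : forall x : int, posz x - posz (- x) = x.
  move=> x; case: (lerP 0 x) => hx.
    by rewrite posz_ge0 // posz_le0 ?oppr_le0 // subr0.
  by rewrite posz_le0 ?(ltW hx) // posz_ge0 ?oppr_ge0 ?(ltW hx) // sub0r opprK.
rewrite [(j == k) || _]orbC.
rewrite /cmat mxE.
case: ifP => hc.
  have z1 : (quiver_of B d j k * quiver_of B d k i = 0)%N.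
    by case/orP: hc => /eqP ->; rewrite quiver_kk ?muln0 ?mul0n.
  have z2 : (quiver_of B d i k * quiver_of B d k j = 0)%N.
    by case/orP: hc => /eqP ->; rewrite quiver_kk ?muln0 ?mul0n.
  rewrite z1 z2 !mul0n !addn0 !quiver_of_int (cmat_skew hD i j) pp.
  rewrite orbC hc mulrN -(cmat_exact hD j i) (cmat_skew hD i j) mulrN opprK.
  by rewrite mulKz.
rewrite orbC hc.
set F1 := (_ %/ _)%N.
set F2 := (_ %/ _)%N.
have eF : F2 = F1 by rewrite /F1 /F2 gcdnC [(gcdn (d i) (d k) * _)%N]mulnC (gcdnC (d i)) (gcdnC (d k) (d j)).
rewrite eF.
have hF : (F1%:Z * ((gcdn (d k) (d i))%:Z * (gcdn (d j) (d k))%:Z) = (gcdn (d j) (d i))%:Z * (d k)%:Z).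
  rewrite -!PoszM; congr Posz.
  rewrite /F1.
  rewrite (mulnC (gcdn (d k) (d i))) divnK //.
  exact: gcd3_dvd.
have gpos : forall x y, 0 < (gcdn (d x) (d y))%:Z.
  by move=> x y; rewrite ltz_nat gcdn_gt0; case: hD => hp _; rewrite hp.
have hcore := core (hpos i) (hpos k) (gpos _ _) (gpos _ _) (cmat_exact hD k i) (cmat_exact hD j k) hF.
rewrite mulrDr hcore -(cmat_exact hD j i) -mulrDr mulKz //.
rewrite !PoszD !PoszM !quiver_of_int (cmat_skew hD j i) (cmat_skew hD j k) (cmat_skew hD k i).
set c := cmat B d j i.
rewrite -[X in _ = X + _](pp c).
ring.
Qed.
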